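(* Let $\bar F^a,\bar F^b,\bar F^c:\mathbb{R}^n\times\mathbb{R}^q\times\mathbb{R}_{>0}\to\mathbb{R}^n$ be closed-loop discrete-time models. If the pairs $(\bar F^a,\bar F^b)$ and $(\bar F^b,\bar F^c)$ are REPC, then the pair $(\bar F^a,\bar F^c)$ is REPC.
   Context: $\mathcal{K}_\infty$: continuous, strictly increasing, unbounded functions $\mathbb{R}_{\ge0}\to\mathbb{R}_{\ge0}$ vanishing at $0$. REPC: $\bar F^a$ is Robustly Equilibrium-Preserving Consistent with $\bar F^b$ (the pair $(\bar F^a,\bar F^b)$ is REPC) if there exists $\phi\in\mathcal{K}_\infty$ such that for each $M,E\ge0$ there exist constants $K=K(M,E)>0$, $T^*=T^*(M,E)>0$ and a function $\rho\in\mathcal{K}_\infty$ such that $|\bar F^a(x^a,e,T)-\bar F^b(x^b,e,T)|\le(1+KT)|x^a-x^b|+T\rho(T)(\max\{|x^a|,|x^b|\}+\phi(|e|))$ for all $|x^a|,|x^b|\le M$, $|e|\le E$ and $T\in(0,T^* )$. *)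

(* Defs.v *)
From HB Require Import structures.
From mathcomp Require Import all_boot all_order all_algebra.
From mathcomp Require Import all_classical all_reals all_analysis.
Set Implicit Arguments. Unset Strict Implicit. Unset Printing Implicit Defensive.
Import Order.TTheory GRing.Theory Num.Theory.
Import numFieldNormedType.Exports.
Local Open Scope classical_set_scope.
Local Open Scope ring_scope.

Definition enorm (R : realType) (n : nat) (v : 'rV[R]_n) : R :=
  Num.sqrt (\sum_(i < n) (v ord0 i) ^+ 2).

(* Class K_infinity: functions R_{>=0} -> R_{>=0} (represented as R -> R,
   only values on [0,+oo) matter) that are continuous, strictly increasing,
   unbounded and vanish at 0. *)
Definition K_inf (R : realType) (f : R -> R) : Prop :=
  [/\ {within `[0, +oo[, continuous f},
      (forall x, 0 <= x -> 0 <= f x),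
      (forall x y, 0 <= x -> x < y -> f x < f y),
      (forall B : R, exists x, 0 <= x /\ B < f x)
    & f 0 = 0].

(* Closed-loop discrete-time model  R^n x R^q x R_{>0} -> R^n; represented as
   a function of T : R, only values for T > 0 are ever used. *)
Definition dt_model (R : realType) (n q : nat) :=
  'rV[R]_n -> 'rV[R]_q -> R -> 'rV[R]_n.

Definition REPC (R : realType) (n q : nat) (Fa Fb : dt_model R n q) : Prop :=
  exists phi : R -> R, K_inf phi /\
    forall M E : R, 0 <= M -> 0 <= E ->
      exists K Tstar : R, exists rho : R -> R,
        [/\ 0 < K, 0 < Tstar, K_inf rho &
          forall (xa xb : 'rV[R]_n) (e : 'rV[R]_q) (T : R),
            enorm xa <= M -> enorm xb <= M -> enorm e <= E ->
            0 < T -> T < Tstar ->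
            enorm (Fa xa e T - Fb xb e T)
              <= (1 + K * T) * enorm (xa - xb)
                 + T * rho T * (Num.max (enorm xa) (enorm xb) + phi (enorm e))].

(* Main.v *)
Require Import Defs.
From HB Require Import structures.
From mathcomp Require Import all_boot all_order all_algebra.
From mathcomp Require Import all_classical all_reals all_analysis.
From mathcomp Require Import ring lra.
Set Implicit Arguments. Unset Strict Implicit. Unset Printing Implicit Defensive.
Import Order.TTheory GRing.Theory Num.Theory.
Import numFieldNormedType.Exports.
Local Open Scope ring_scope.

Section E.
Variables (R : realType) (n : nat).

Lemma enorm_ge0 (v : 'rV[R]_n) : 0 <= enorm v.
Proof. exact: sqrtr_ge0. Qed.

Lemma sq_sum_ge0 (f : 'I_n -> R) : 0 <= \sum_i f i ^+ 2.
Proof. by apply: sumr_ge0 => i _; exact: sqr_ge0. Qed.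

Lemma cs (u v : 'I_n -> R) :
  \sum_i u i * v i <= Num.sqrt (\sum_i u i ^+ 2) * Num.sqrt (\sum_i v i ^+ 2).
Proof.
set A := \sum_i u i ^+ 2; set B := \sum_i v i ^+ 2; set C := \sum_i u i * v i.
set a := Num.sqrt A; set b := Num.sqrt B.
have A0 : 0 <= A by exact: sq_sum_ge0.
have B0 : 0 <= B by exact: sq_sum_ge0.
have aa : a ^+ 2 = A by rewrite sqr_sqrtr.
have bb : b ^+ 2 = B by rewrite sqr_sqrtr.
have a0 : 0 <= a by exact: sqrtr_ge0.
have b0 : 0 <= b by exact: sqrtr_ge0.
have key : 0 <= b ^+ 2 * A - 2 * a * b * C + a ^+ 2 * B.
  have -> : b ^+ 2 * A - 2 * a * b * C + a ^+ 2 * B = \sum_i (b * u i - a * v i) ^+ 2.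
    rewrite /A /B /C !mulr_sumr -sumrN -!big_split /=; apply: eq_bigr => i _; ring.
  exact: sq_sum_ge0.
have [ab0|abpos] := eqVneq (a * b) 0.
  move/eqP: ab0; rewrite mulf_eq0 => /orP[] /eqP z.
  - have : A == 0 by rewrite -aa z expr2 mulr0.
    rewrite psumr_eq0; last by move=> i _; exact: sqr_ge0.
    move/allP => H; rewrite /C big1 ?z ?mul0r // => i _.
    have := H i (mem_index_enum i); rewrite /= sqrf_eq0 => /eqP ->; by rewrite mul0r.
  - have : B == 0 by rewrite -bb z expr2 mulr0.
    rewrite psumr_eq0; last by move=> i _; exact: sqr_ge0.
    move/allP => H; rewrite /C big1 ?z ?mulr0 // => i _.
    have := H i (mem_index_enum i); rewrite /= sqrf_eq0 => /eqP ->; by rewrite mulr0.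
have abp : 0 < a * b by rewrite lt_def abpos mulr_ge0.
rewrite -aa -bb in key.
have : 0 <= (a * b) * (a * b - C) by nra.
by rewrite pmulr_rge0 // subr_ge0.
Qed.

Lemma enorm_tri (u v : 'rV[R]_n) : enorm (u + v) <= enorm u + enorm v.
Proof.
rewrite /enorm.
have -> : \sum_(i < n) (u + v) ord0 i ^+ 2 =
   \sum_i u ord0 i ^+ 2 + 2 * \sum_i (u ord0 i * v ord0 i) + \sum_i v ord0 i ^+ 2.
  rewrite mulr_sumr -!big_split /=; apply: eq_bigr => i _; rewrite !mxE; ring.
have := cs (fun i => u ord0 i) (fun i => v ord0 i).
set A := \sum_i _ ^+ 2; set B := \sum_i _ ^+ 2; set C := \sum_i _.
move=> hC.
have A0 : 0 <= A by exact: sq_sum_ge0.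
have B0 : 0 <= B by exact: sq_sum_ge0.
rewrite -(ger0_norm (addr_ge0 (sqrtr_ge0 A) (sqrtr_ge0 B))) -sqrtr_sqr.
apply: ler_wsqrtr.
rewrite sqrrD !sqr_sqrtr //; lra.
Qed.
End E.

Lemma K_infD (R : realType) (f g : R -> R) : K_inf f -> K_inf g -> K_inf (fun x => f x + g x).
Proof.
case=> cf f0 fi fu fz [cg g0 gi gu gz]; split.
- move=> x; apply: cvgD; [exact: cf | exact: cg].
- by move=> x x0; rewrite addr_ge0 ?f0 ?g0.
- by move=> x y x0 xy; rewrite ltrD ?fi ?gi.
- move=> B; have [x [x0 hx]] := fu B; exists x; split => //.
  by rewrite (lt_le_trans hx) // lerDl g0.
- by rewrite fz gz addr0.
Qed.

Theorem proposition1 (R : realType) (n q : nat) (Fa Fb Fc : dt_model R n q) :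
  REPC Fa Fb -> REPC Fb Fc -> REPC Fa Fc.
Proof.
move=> [p1 [Kp1 H1]] [p2 [Kp2 H2]].
exists (fun x => p1 x + p2 x); split; first exact: K_infD.
move=> M E M0 E0.
have [K1 [T1 [r1 [K10 T10 Kr1 h1]]]] := H1 M E M0 E0.
have [K2 [T2 [r2 [K20 T20 Kr2 h2]]]] := H2 M E M0 E0.
exists K1, (Num.min T1 T2), (fun x => r1 x + r2 x); split => //.
  by rewrite lt_min T10 T20.
  exact: K_infD.
move=> xa xc e T ha hc he T0; rewrite lt_min => /andP[TT1 TT2].
have := h1 xa xc e T ha hc he T0 TT1.
have := h2 xc xc e T hc hc he T0 TT2.
have -> : enorm (xc - xc) = 0.
  by rewrite subrr /enorm big1 ?sqrtr0 // => i _; rewrite mxE expr0n.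
rewrite mulr0 add0r maxxx => hb hA.
have tri : enorm (Fa xa e T - Fc xc e T) <= enorm (Fa xa e T - Fb xc e T) + enorm (Fb xc e T - Fc xc e T).
  have -> : Fa xa e T - Fc xc e T = (Fa xa e T - Fb xc e T) + (Fb xc e T - Fc xc e T)
    by rewrite addrA subrK.
  exact: enorm_tri.
have ee := enorm_ge0 e.
case: Kr1 => _ r10 _ _ _; case: Kr2 => _ r20 _ _ _.
case: Kp1 => _ p10 _ _ _; case: Kp2 => _ p20 _ _ _.
have R1 := r10 T (ltW T0); have R2 := r20 T (ltW T0).
have P1 := p10 _ ee; have P2 := p20 _ ee.
have mm : enorm xc <= Num.max (enorm xa) (enorm xc) by rewrite le_max lexx orbT.
set m1 := Num.max _ _ in hA mm *.
have Q1 : 0 <= T * r1 T * p2 (enorm e) := mulr_ge0 (mulr_ge0 (ltW T0) (r10 T (ltW T0))) P2.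
have mm0 : 0 <= m1 - enorm xc by rewrite subr_ge0.
have Q2 : 0 <= T * r2 T * (m1 - enorm xc + p1 (enorm e)) := mulr_ge0 (mulr_ge0 (ltW T0) R2) (addr_ge0 mm0 P1).
apply: (le_trans tri).
have E1 : T * (r1 T + r2 T) * (m1 + (p1 (enorm e) + p2 (enorm e))) =
   T * r1 T * (m1 + p1 (enorm e)) + T * r2 T * (enorm xc + p2 (enorm e)) +
   T * r1 T * p2 (enorm e) + T * r2 T * (m1 - enorm xc + p1 (enorm e)) by ring.
rewrite E1; lra.
Qed.
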